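(* For every deterministic local policy D-Local there exists a collectible reward decomposition MDP with $n$ rewards and discount factor $\gamma=1-1/n$ such that $\frac{\text{D-Local}}{\text{OPT}}\le\frac{24}{n}$, where D-Local also denotes the value of the policy on that MDP.
   Context: A collectible reward decomposition MDP is an MDP with deterministic dynamics, an initial state $s_0$, discount $\gamma$, and $n$ reward states $s_1,\dots,s_n$; visiting $s_i$ for the first time yields reward $1$ and each reward can be collected only once. For each $j$ there is an option $o_j$ that follows a shortest path to $s_j$ and terminates when collecting it; its value from state $x$ is $V_j(x)=\gamma^{d(x,s_j)}$ where $d$ is shortest-path distance. A local policy is a mapping $\pi(x,h,\{V_i(x)\}_{i=1}^n)\to\Delta(\{o_i\}_{i=1}^n)$ from the current state $x$, the history $h$ of previous steps (including which rewards were collected) and the option values at $x$, to a distribution over options; it is deterministic if it always outputs a point mass. The value of a policy is its expected discounted return $\sum_k\gamma^{T_k}$ ($T_k$ the time the $k$-th reward is collected), and $\text{OPT}$ is the maximum over all orders of collecting the rewards of the discounted return, i.e. $\max_{(i_1,\dots,i_n)}\sum_{j=0}^{n-1}\gamma^{\sum_{t=0}^{j}d_{i_t,i_{t+1}}}$ with $i_0=s_0$. *)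

(* Defs.v *)
From HB Require Import structures.
From mathcomp Require Import all_boot all_order all_algebra all_fingroup.
From mathcomp Require Import boolp.
Set Implicit Arguments. Unset Strict Implicit. Unset Printing Implicit Defensive.
Import Order.TTheory GRing.Theory Num.Theory.
Local Open Scope ring_scope.

(* A deterministic MDP on the finite state space 'I_nS; the transition
   relation [adj] lists the states reachable in one step (one per action).
   It has an initial state, n reward states, and for each reward j an option
   whose one-step policy is [opt j] (it must follow a shortest path). *)
Record crd_mdp (n : nat) := CRD {
  nS : nat;
  adj : rel 'I_nS;
  s0 : 'I_nS;
  srew : 'I_n -> 'I_nS;
  opt : 'I_n -> 'I_nS -> 'I_nS }.
Arguments nS {n} c.
Arguments adj {n} c _ _.
Arguments s0 {n} c.
Arguments srew {n} c _.
Arguments opt {n} c _ _.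

Fixpoint reachb (T : finType) (e : rel T) (k : nat) (x y : T) : bool :=
  match k with
  | 0 => x == y
  | k'.+1 => [exists z, e x z && reachb e k' z y]
  end.

(* shortest-path distance (0 if unreachable; excluded by well-formedness) *)
Definition dist (T : finType) (e : rel T) (x y : T) : nat :=
  match pselect (exists k, reachb e k x y) with
  | left H => @ex_minn (fun k => reachb e k x y) H
  | right _ => 0%N
  end.

Definition crd_wf n (M : crd_mdp n) : Prop :=
  injective (srew M) /\
  (forall x j, exists k, reachb (adj M) k x (srew M j)) /\
  (forall x j, x != srew M j ->
     adj M x (opt M j x) /\
     (dist (adj M) (opt M j x) (srew M j)).+1 = dist (adj M) x (srew M j)).

(* History available to the policy: the sequence of states visited so far
   (index = time step, last = current state), the previous decisions
   (state, option values observed there, option chosen), and the set of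
   rewards already collected. States are given by their labels (nat). *)
Record history (R : Type) (n : nat) := Hist {
  h_visits : seq nat;
  h_decisions : seq (nat * ('I_n -> R) * 'I_n);
  h_collected : {set 'I_n} }.

(* deterministic local policy: (state, history, option values) -> option *)
Definition det_local_policy (R : Type) (n : nat) :=
  nat -> history R n -> ('I_n -> R) -> 'I_n.

Section Run.
Variables (R : realFieldType) (n : nat) (M : crd_mdp n) (g : R)
          (pi : det_local_policy R n).

Definition optval (x : 'I_(nS M)) (i : 'I_n) : R :=
  g ^+ dist (adj M) x (srew M i).

Definition run_step (c : seq 'I_(nS M) * seq (nat * ('I_n -> R) * 'I_n)) :=
  let: (vis, hs) := c in
  let x := last (s0 M) vis in
  let vals := optval x in
  let H := Hist (map val vis) hs [set i | srew M i \in vis] in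
  let j := pi (val x) H vals in
  let path := [seq iter m (opt M j) x | m <- iota 1 (dist (adj M) x (srew M j))] in
  (vis ++ path, rcons hs (val x, vals, j)).

Definition run k := iter k run_step ([:: s0 M], [::]).

(* trajectory after k option executions; position t is the state at time t *)
Definition visited k := (run k).1.

Definition at_time (i : 'I_n) : pred nat := fun t =>
  `[< exists k, (t < size (visited k))%N /\ nth (s0 M) (visited k) t = srew M i >].

Definition policy_value : R :=
  \sum_(i < n) match pselect (exists t, at_time i t) with
               | left H => g ^+ (@ex_minn (at_time i) H)
               | right _ => 0
               end.

Definition order_path (p : {perm 'I_n}) : seq 'I_(nS M) :=
  s0 M :: [seq srew M (p i) | i <- enum 'I_n].

Definition OPT : R :=
  \big[Num.max/0]_(p : {perm 'I_n})
    \sum_(j < n) g ^+ (\sum_(t < j.+1)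
       dist (adj M) (nth (s0 M) (order_path p) t)
                       (nth (s0 M) (order_path p) t.+1))%N.
End Run.

(* Main.v *)
Require Import Defs.
From HB Require Import structures.
From mathcomp Require Import all_boot all_order all_algebra all_fingroup.
From mathcomp Require Import boolp.
From mathcomp Require Import zify ring lra.
Set Implicit Arguments. Unset Strict Implicit. Unset Printing Implicit Defensive.
Import Order.TTheory GRing.Theory Num.Theory.
Local Open Scope ring_scope.

Section Graph.
Variables (T : finType) (e : rel T).

Lemma dist_le k x y : reachb e k x y -> (dist e x y <= k)%N.
Proof.
move=> H; rewrite /dist; case: pselect => [P|[]]; last by exists k.
by case: ex_minnP => m _ /(_ k H).
Qed.

Lemma dist_reach x y : (exists k, reachb e k x y) -> reachb e (dist e x y) x y.
Proof.
move=> ex; rewrite /dist; case: pselect => [P|//].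
by case: ex_minnP.
Qed.

Lemma bellman (y : T) (h : T -> nat) :
  h y = 0%N ->
  (forall x, x != y -> exists z, e x z /\ (h z).+1 = h x) ->
  (forall x z, e x z -> (h x <= (h z).+1)%N) ->
  forall x, dist e x y = h x.
Proof.
move=> h0 hex hmon.
have lo : forall k x, reachb e k x y -> (h x <= k)%N.
  elim=> [|k IH] x /=; first by move/eqP->; rewrite h0.
  case/existsP=> z /andP[exz rz]; apply: leq_trans (hmon _ _ exz) _.
  by rewrite ltnS IH.
have up : forall k x, h x = k -> reachb e k x y.
  elim=> [|k IH] x hx /=.
    case: (eqVneq x y) => // /hex [z [_ hz]]; by rewrite hx in hz.
  case: (eqVneq x y) => [exy|/hex [z [exz hz]]]; first by rewrite exy h0 in hx.
  apply/existsP; exists z; rewrite exz /= IH //; by rewrite hx in hz; case: hz.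
move=> x; apply/eqP; rewrite eqn_leq; apply/andP; split.
  exact: dist_le (up _ _ erefl).
apply: lo; apply: dist_reach; exists (h x); exact: up.
Qed.

Lemma bellman_up (y : T) (h : T -> nat) :
  h y = 0%N ->
  (forall x, x != y -> exists z, e x z /\ (h z).+1 = h x) ->
  forall x, reachb e (h x) x y.
Proof.
move=> h0 hex.
have up : forall k x, h x = k -> reachb e k x y.
  elim=> [|k IH] x hx /=.
    case: (eqVneq x y) => // /hex [z [_ hz]]; by rewrite hx in hz.
  case: (eqVneq x y) => [exy|/hex [z [exz hz]]]; first by rewrite exy h0 in hx.
  apply/existsP; exists z; rewrite exz /= IH //; by rewrite hx in hz; case: hz.
by move=> x; apply: up.
Qed.

Lemma path_reach x s b : path e x s -> (b <= size s)%N -> reachb e b x (nth x (x :: s) b).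
Proof.
elim: s x b => [|z s IH] x [|b] //=; try by rewrite eqxx.
move=> /andP[exz pz] hb; apply/existsP; exists z; rewrite exz /=.
by rewrite (set_nth_default z) //; apply: IH.
Qed.
End Graph.

Section RunLemmas.
Variables (R : realFieldType) (n : nat) (M : crd_mdp n) (g : R)
          (pi : det_local_policy R n).

Definition seg (x : 'I_(nS M)) (j : 'I_n) :=
  [seq iter m (opt M j) x | m <- iota 1 (dist (adj M) x (srew M j))].

Lemma visited_step k : exists j,
  visited M g pi k.+1 = visited M g pi k ++ seg (last (s0 M) (visited M g pi k)) j.
Proof.
rewrite /visited /run iterS; case: (iter k _ _) => vis hs /=.
by eexists.
Qed.

Lemma seg_path (wf : crd_wf M) x j : path (adj M) x (seg x j).
Proof.
case: wf => _ [_ wf3].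
rewrite /seg; move hd: (dist (adj M) x (srew M j)) => d.
elim: d x hd => [|d IH] x hd //=.
have nx : x != srew M j.
  apply/eqP => ex; rewrite ex in hd.
  by have := @dist_le _ (adj M) 0 (srew M j) (srew M j) (eqxx _); rewrite hd.
case: (wf3 x j nx) => ax hdx; rewrite ax /=.
rewrite hd in hdx; case: hdx => hdx.
have -> : iota 2 d = map succn (iota 1 d) by rewrite -(iotaDl 1).
rewrite -map_comp.
have := IH _ hdx; congr (path _ _ _); apply: eq_map => m /=.
by rewrite -iterSr iterS.
Qed.
End RunLemmas.

Section Arith.
Variables (n L : nat).
Definition adjN (x y : nat) : bool :=
  [|| (x <= n) && (y <= n), (x == 0) && (y == n.+1),
      (n < x) && (y == x.+1) | (x == n + L) && (y == 0)]%N.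
Definition nextN (x y : nat) : nat :=
  if (x <= n)%N then (if (y <= n)%N then y else if x == 0%N then n.+1 else 0)
  else (if x == (n + L)%N then 0 else x.+1).
Definition hN (y x : nat) : nat :=
  if (y <= n)%N then
    (if (x <= n)%N then (if x == y then 0 else 1) else (n + L - x).+1 + (if y == 0%N then 0 else 1))
  else (if (x <= n)%N then (if x == 0%N then 1 else 2)
        else if x == n.+1 then 0 else (n + L - x).+2)%N.

Hypothesis hL : (2 <= L)%N.

Lemma hN_y y : (y <= n.+1)%N -> hN y y = 0%N.
Proof. rewrite /hN => hy; repeat case: ifP => //; lia. Qed.

Lemma hN_next y x : (y <= n.+1)%N -> (x <= n + L)%N -> x != y ->
  adjN x (nextN x y) /\ (hN y (nextN x y)).+1 = hN y x /\ (nextN x y <= n + L)%N.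
Proof.
rewrite /hN /adjN /nextN => hy hx hxy.
repeat (case: ifP => /=); repeat (case: eqP => /=); try lia.
Qed.

Lemma hN_mon y x z : (y <= n.+1)%N -> (x <= n + L)%N -> (z <= n + L)%N ->
  (1 <= y)%N -> adjN x z -> (hN y x <= (hN y z).+1)%N.
Proof.
rewrite /hN /adjN => hy hx hz y1.
repeat (case: ifP => /=); repeat (case: eqP => /=); try lia.
Qed.
End Arith.

Section Constr.
Variables (n : nat) (hn : (2 <= n)%N) (j0 : 'I_n).
Local Notation L := (n * n)%N.
Definition nS0 := (n + L).+1.
Definition srewN (i : 'I_n) : nat := if i == j0 then n.+1 else (val i).+1.
Definition MM : crd_mdp n :=
  @CRD n nS0 (fun x y => adjN n L x y) ord0 (fun i => inord (srewN i))
     (fun j x => inord (nextN n L x (srewN j))).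

Lemma hL : (2 <= L)%N. Proof. nia. Qed.

Lemma srewN_le i : (1 <= srewN i <= n.+1)%N.
Proof. rewrite /srewN; case: ifP => //= _; have := ltn_ord i; lia. Qed.

Lemma val_srew i : val (srew MM i) = srewN i.
Proof. rewrite /= inordK //; have := srewN_le i; lia. Qed.

Lemma val_opt j (x : 'I_nS0) : val (opt MM j x) = nextN n L x (srewN j).
Proof.
rewrite /= inordK //.
case: (eqVneq (val x) (srewN j)) => [->|ne].
  rewrite /nextN; have := srewN_le j; repeat case: ifP => //; lia.
have /andP[_ h2] := srewN_le j.
have := hN_next hL h2 _ ne; rewrite /nS0 ltnS; move=> /(_ (ltn_ord x)) => /= -[_ [_ ]].
by [].
Qed.

Lemma MM_hex i (y : 'I_nS0) : y != srew MM i ->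
  adj MM y (opt MM i y) /\ (hN n L (srewN i) (opt MM i y)).+1 = hN n L (srewN i) y.
Proof.
have := srewN_le i => /andP[h1 h2] ne.
have yl : (y <= n + L)%N by have := ltn_ord y; rewrite /nS0 ltnS.
have ne' : val y != srewN i by rewrite -val_srew; apply: contra ne => /eqP/val_inj ->.
have [a [b c]] := hN_next hL h2 yl ne'.
rewrite val_opt; split => //.
by move: a; rewrite -(val_opt i y).
Qed.

Lemma MM_h0 i : hN n L (srewN i) (srew MM i) = 0%N.
Proof. have := srewN_le i => /andP[h1 h2]. by rewrite val_srew; apply: (hN_y hL h2). Qed.

Lemma distM i (x : 'I_nS0) : dist (adj MM) x (srew MM i) = hN n L (srewN i) x.
Proof.
have := srewN_le i => /andP[h1 h2].
apply: (@bellman _ _ _ (fun x : 'I_nS0 => hN n L (srewN i) x)).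
- exact: MM_h0.
- by move=> y /MM_hex [? ?]; exists (opt MM i y).
- move=> y z /= a; apply: (hN_mon hL h2 _ _ h1 a).
  by have := ltn_ord y; rewrite /nS0 ltnS.
  by have := ltn_ord z; rewrite /nS0 ltnS.
Qed.

Lemma wfM : crd_wf MM.
Proof.
split; [|split].
- move=> i i' /(congr1 val); rewrite !val_srew /srewN.
  case: (eqVneq i j0) => [->|ni]; case: (eqVneq i' j0) => [->|ni'] //=.
  + by move=> h; have := ltn_ord i'; lia.
  + by move=> h; have := ltn_ord i; lia.
  + by case=> /val_inj.
- move=> x j; exists (hN n L (srewN j) x).
  apply: (@bellman_up _ _ _ (fun x : 'I_nS0 => hN n L (srewN j) x)).
  + exact: MM_h0.
  + by move=> y /MM_hex [? ?]; exists (opt MM j y).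
- move=> x j /MM_hex [a b]; split => //.
  by rewrite !distM.
Qed.
End Constr.

Lemma bern_nat m k : (m ^ k * (m + k) <= m * (m + 1) ^ k)%N.
Proof.
elim: k => [|k IH]; first by rewrite !expn0; lia.
rewrite !expnS.
have h1 : (m ^ k * (m + k) * (m + 1) <= (m + 1) * (m * (m + 1) ^ k))%N.
  by rewrite mulnC leq_mul2l IH orbT.
have h2 : (m * (m + k.+1) <= (m + k) * (m + 1))%N by nia.
move: h1 h2; move: (m ^ k)%N ((m+1) ^ k)%N => a b h1 h2.
have h3 : (a * (m * (m + k.+1)) <= a * ((m + k) * (m + 1)))%N by rewrite leq_mul2l h2 orbT.
apply: leq_trans _ (leq_trans h1 _); [nia|nia].
Qed.

Lemma bern2 m : (0 < m)%N -> ((m + 1) * m ^ ((m + 1) * (m + 1)) <= (m + 1) ^ ((m + 1) * (m + 1)))%N.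
Proof.
move=> m0; set L := ((m + 1) * (m + 1))%N.
have := bern_nat m L.
rewrite -(leq_pmul2l m0).
move: (m ^ L)%N ((m + 1) ^ L)%N => a b h.
have mm : (0 < m * m)%N by nia.
have h4 : (m * (m+1) <= m + L)%N by rewrite /L; nia.
have h5 : (m * a * (m * (m+1)) <= m * a * (m + L))%N by rewrite leq_mul2l h4 orbT.
nia.
Qed.

Lemma gamL_gen (R : realFieldType) m : (0 < m)%N ->
  ((m + 1)%:R : R) * (1 - (m + 1)%:R^-1) ^+ ((m + 1) * (m + 1)) <= 1.
Proof.
move=> m0.
have nz : ((m + 1)%:R : R) != 0 by rewrite pnatr_eq0; lia.
have -> : 1 - ((m + 1)%:R : R)^-1 = m%:R / (m + 1)%:R.
  by rewrite natrD; field; move: nz; rewrite natrD.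
rewrite exprMn exprVn -!natrX mulrA ler_pdivrMr; last by rewrite ltr0n expn_gt0; lia.
by rewrite mul1r -natrM ler_nat; apply: bern2.
Qed.

Lemma bern_real (R : realFieldType) (x : R) k : 0 <= x -> x <= 1 -> 1 - k%:R * x <= (1 - x) ^+ k.
Proof.
move=> x0 x1; elim: k => [|k IH]; first by rewrite mul0r subr0 expr0.
rewrite exprSr.
have h : 0 <= 1 - x by rewrite subr_ge0.
apply: le_trans (ler_wpM2r h IH).
have := ler0n R k; rewrite -natr1; nra.
Qed.

Lemma sum_tri (R : realFieldType) m :
  \sum_(j < m) ((j.+1)%:R : R) *+ 2 = (m * m.+1)%:R.
Proof.
elim: m => [|m IH]; first by rewrite big_ord0.
rewrite big_ord_recr /= IH (_ : (m.+1)%:R *+ 2 = (m.+1 * 2)%:R); last by rewrite natrM mulr_natr.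
rewrite -natrD; congr (_%:R); lia.
Show.
Qed.

Lemma sum_opt_lb (R : realFieldType) m : (0 < m)%N ->
  \sum_(j < m.+1) (if (j < m)%N then 1 - (j.+1)%:R / (m.+1)%:R else 0) = (m%:R / 2 : R).
Proof.
move=> m0; rewrite big_ord_recr /= ltnn addr0.
rewrite (eq_bigr (fun j : 'I_m => 1 - (j.+1)%:R / (m.+1)%:R : R)); last first.
  by move=> j _; rewrite /= ltn_ord.
rewrite sumrB sumr_const card_ord -mulr_suml.
have e := sum_tri R m.
have -> : \sum_(j < m) ((j.+1)%:R : R) = (m * m.+1)%:R / 2.
  by rewrite -e sumrMnl -[X in X / 2]mulr_natr mulfK ?pnatr_eq0.
rewrite natrM; field.
by rewrite nat1r pnatr_eq0.
Qed.

Lemma sum_opt_lb' (R : realFieldType) n : (1 < n)%N ->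
  \sum_(j < n) (if (j < n.-1)%N then 1 - (j.+1)%:R / n%:R else 0) = (n.-1%:R / 2 : R).
Proof. by case: n => [|m] //= hm; apply: sum_opt_lb; lia. Qed.

Section Main.
Variables (R : realFieldType) (n : nat) (hn : (2 <= n)%N) (pi : det_local_policy R n).
Local Notation L := (n * n)%N.
Definition gam : R := 1 - n%:R^-1.
Definition j0 : 'I_n := pi 0%N (@Hist R n [:: 0%N] [::] set0) (fun _ => gam).
Local Notation M := (MM j0).

Lemma hN0 i : hN n L (srewN j0 i) 0 = 1%N.
Proof. rewrite /hN /srewN; case: eqP => _; repeat case: ifP => //; lia. Qed.

Lemma srew_ne0 i : srew M i != ord0.
Proof. apply/eqP => /(congr1 val); rewrite (val_srew hn) /=; have := srewN_le hn j0 i; lia. Qed.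

Lemma visited1 : visited M gam pi 1 = [:: ord0; srew M j0].
Proof.
have Hset : [set i | srew M i \in [:: s0 M]] = set0.
  by apply/setP => i; rewrite !inE (negbTE (srew_ne0 i)).
have Hopt : @optval R n M gam (last (s0 M) [:: s0 M]) = (fun _ => gam).
  by apply: funext => i; rewrite /optval (distM hn) hN0 expr1.
rewrite /visited /run iterS iter0 /run_step.
cbv beta iota zeta.
rewrite Hset Hopt (_ : pi _ _ _ = j0) // (distM hn).
have -> : hN n L (srewN j0 j0) (last (s0 M) [:: s0 M]) = 1%N by exact: hN0.
rewrite /=; congr (_ :: _ :: _); apply: val_inj.
congr (val (inord _)); rewrite /nextN /srewN eqxx /= ltnn.
by [].
Qed.

Lemma visited_inv k : exists rest,
  visited M gam pi k.+1 = s0 M :: srew M j0 :: rest /\ path (adj M) (srew M j0) rest.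
Proof.
elim: k => [|k [rest [e p]]]; first by exists [::]; rewrite visited1.
have [j ->] := visited_step M gam pi k.+1.
rewrite e; exists (rest ++ seg (last (srew M j0) rest) j); split => //.
by rewrite cat_path p seg_path //; apply: wfM.
Qed.

Lemma at_time_ge i t : i != j0 -> at_time M gam pi i t -> (L <= t)%N.
Proof.
move=> ni /asboolP [[|k] [ht hnth]].
  move: ht hnth; rewrite /visited /run /=; case: t => //= _ /esym/eqP.
  by rewrite (negbTE (srew_ne0 i)).
have [rest [e p]] := visited_inv k.
move: ht hnth; rewrite e; case: t => [|t] /=.
  by move=> _ /esym/eqP; rewrite (negbTE (srew_ne0 i)).
rewrite ltnS => ht; rewrite (set_nth_default (srew M j0)) // => hnth.
have := path_reach p ht; rewrite hnth => /dist_le; rewrite (distM hn).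
rewrite (val_srew hn) /hN /srewN (negbTE ni).
rewrite eqxx; have := ltn_ord i; repeat case: ifP => //; lia.
Qed.

Lemma gam_ge0 : 0 <= gam.
Proof. rewrite /gam subr_ge0 invf_le1 ?ler1n ?ltr0n; lia. Qed.
Lemma gam_le1 : gam <= 1.
Proof. by rewrite /gam lerBlDr lerDl invr_ge0 ler0n. Qed.

Lemma pv_le : policy_value M gam pi <= 1 + n%:R * gam ^+ L.
Proof.
rewrite /policy_value (bigD1 j0) //=; apply: lerD.
  case: pselect => // H; exact: exprn_ile1 gam_ge0 gam_le1.
apply: (@le_trans _ _ (\sum_(i < n | i != j0) gam ^+ L)).
  apply: ler_sum => i ni; case: pselect => [H|_]; last exact: exprn_ge0 gam_ge0.
  case: ex_minnP => t ht _; apply: (ler_wiXn2l gam_ge0 gam_le1).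
  exact: at_time_ge ni ht.
rewrite mulr_natl (_ : gam ^+ L *+ n = \sum_(i < n) gam ^+ L); last by rewrite sumr_const card_ord.
rewrite [X in _ <= X](bigD1 j0) //= lerDr.
exact: exprn_ge0 gam_ge0.
Qed.

Lemma lt_pred : (n.-1 < n)%N. Proof. lia. Qed.
Definition lastI : 'I_n := Ordinal lt_pred.
Definition p0 : {perm 'I_n} := tperm j0 lastI.

Lemma op_le t : (t < n)%N -> (val (nth (s0 M) (order_path M p0) t) <= n)%N.
Proof.
case: t => [|u] ht; first by [].
rewrite /order_path /= (nth_map j0) ?size_enum_ord; last lia.
rewrite (val_srew hn) /srewN.
have hu : (u < n)%N by lia.
have nl : nth j0 (enum 'I_n) u != lastI.
  by apply/eqP => /(congr1 (@nat_of_ord n)); rewrite nth_enum_ord //=; lia.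
case: ifP => [/eqP|_]; last exact: ltn_ord.
rewrite -{2}(tpermR j0 lastI) => /perm_inj e; by rewrite e eqxx in nl.
Qed.

Lemma dist1 (x y : 'I_(nS M)) : (val x <= n)%N -> (val y <= n)%N -> (dist (adj M) x y <= 1)%N.
Proof.
move=> hx hy; apply: dist_le => /=; apply/existsP; exists y.
by rewrite eqxx andbT /adjN hx hy.
Qed.

Lemma E_le j : (j < n.-1)%N -> (\sum_(t < j.+1) dist (adj M) (nth (s0 M) (order_path M p0) t)
    (nth (s0 M) (order_path M p0) t.+1) <= j.+1)%N.
Proof.
move=> hj; apply: (@leq_trans (\sum_(t < j.+1) 1)%N).
  apply: leq_sum => t _; have := ltn_ord t => ht.
  by apply: dist1; apply: op_le; lia.
by rewrite sum_nat_const card_ord muln1.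
Qed.

Lemma OPT_ge : (n.-1%:R / 2 : R) <= OPT M gam.
Proof.
apply: le_trans (le_bigmax _ _ p0).
rewrite -(sum_opt_lb' R hn); apply: ler_sum => j _.
case: ifP => hj; last exact: exprn_ge0 gam_ge0.
have ni0 : 0 <= (n%:R : R)^-1 by rewrite invr_ge0 ler0n.
have ni1 : (n%:R : R)^-1 <= 1 by rewrite invf_le1 ?ler1n ?ltr0n; lia.
apply: le_trans (bern_real _ ni0 ni1) _.
apply: (ler_wiXn2l gam_ge0 gam_le1); exact: E_le.
Qed.
End Main.

Definition M1 : crd_mdp 1 := @CRD 1 1 (fun _ _ => true) ord0 (fun _ => ord0) (fun _ _ => ord0).

Lemma n1_case (R : realFieldType) (pi : det_local_policy R 1) :
  let gamma : R := 1 - 1%:R^-1 in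
  crd_wf M1 /\ 0 < OPT M1 gamma /\ policy_value M1 gamma pi / OPT M1 gamma <= 24 / 1%:R.
Proof.
move=> gamma.
have g0 : gamma = 0 by rewrite /gamma invr1 subrr.
have dist0 : forall x y : 'I_(nS M1), dist (adj M1) x y = 0%N.
  move=> x y; apply/eqP; rewrite -leqn0; apply: dist_le => /=.
  by rewrite (ord1 x) (ord1 y).
have Oge : 1 <= OPT M1 gamma.
  apply: le_trans (le_bigmax _ _ 1%g).
  by rewrite big_ord1 big_ord1 dist0 expr0.
have pv : policy_value M1 gamma pi <= 1.
  rewrite /policy_value big_ord1; case: pselect => // H.
  by apply: exprn_ile1; rewrite g0 ?lexx ?ler01.
split; [|split].
- split; [|split].
  + by move=> i j _; rewrite (ord1 i) (ord1 j).
  + by move=> x j; exists 0%N => /=; rewrite (ord1 x).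
  + by move=> x j; rewrite (ord1 x) eqxx.
- exact: lt_le_trans ltr01 Oge.
- have O0 : 0 < OPT M1 gamma by exact: lt_le_trans ltr01 Oge.
  rewrite ler_pdivrMr // divr1.
  apply: le_trans pv _; apply: le_trans Oge _.
  rewrite ler_peMl //; first exact: ltW.
  by rewrite (ler_nat R 1 24).
Qed.

Unset Implicit Arguments.
Set Strict Implicit.
Theorem theorem2 (R : realFieldType) (n : nat) (hn : (0 < n)%N)
  (pi : det_local_policy R n) :
  let gamma : R := 1 - n%:R^-1 in
  exists M : crd_mdp n,
    crd_wf M /\ 0 < OPT M gamma /\
    policy_value M gamma pi / OPT M gamma <= 24 / n%:R.
Proof.
move=> gamma.
case: (leqP n 1) => [n1|n2].
  have e : n = 1%N by lia.
  subst n; exists M1; exact: n1_case.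
exists (MM (j0 pi)).
have Oge := OPT_ge n2 pi.
have pv := pv_le n2 pi.
have gl : n%:R * gam R n ^+ (n * n) <= 1.
  have := @gamL_gen R n.-1; rewrite (_ : (n.-1 + 1)%N = n); last lia.
  by apply; lia.
have y1 : (1 : R) <= n.-1%:R by rewrite ler1n; lia.
have xn : (n%:R : R) = n.-1%:R + 1 by rewrite natr1 prednK //; lia.
have O0 : 0 < OPT (MM (j0 pi)) gamma.
  apply: lt_le_trans Oge; apply: divr_gt0 => //; lra.
split; [exact: wfM|split => //].
rewrite ler_pdivrMr //.
apply: le_trans pv _.
apply: (@le_trans _ _ 2); first lra.
apply: (@le_trans _ _ (24 / n%:R * (n.-1%:R / 2))); last first.
  by apply: ler_wpM2l Oge; apply: divr_ge0; lra.
have nz : (n%:R : R) != 0 by rewrite pnatr_eq0; lia.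
rewrite (_ : 24 / n%:R * (n.-1%:R / 2) = 12 * n.-1%:R / n%:R); last by field.
rewrite ler_pdivlMr; last by rewrite ltr0n; lia.
lra.
Qed.
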